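(* Let $n\in\mathbb{N}$ and let $X$ be the set of all compact subsets of $(0,1)^n$ with nonempty interior, viewed as a Borel subset of $\mathcal{K}((0,1)^n)$. There exist Borel measurable maps $f_k:X\to(0,1)^n$, $k\in\mathbb{N}$, such that for every $K\in X$: (i) $f_k(K)\in(0,1)^n\setminus K$ for all $k$; (ii) the sequence $(f_k(K))_{k=1}^\infty$ is injective; (iii) $\overline{\{f_k(K):k\in\mathbb{N}\}}=\{f_k(K):k\in\mathbb{N}\}\cup\partial K$; (iv) for every $l\in\mathbb{N}$ the point $f_l(K)$ is isolated in $\overline{\{f_k(K):k\in\mathbb{N}\}}$.
   Context: $\mathcal{K}(Z)$ is the space of compact subsets of $Z$ with the Vietoris topology. Closures, interiors and boundaries are taken in $\mathbb{R}^n$. *)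

(* Defs.v *)
From HB Require Import structures.
From mathcomp Require Import all_boot all_order all_algebra.
From mathcomp Require Import all_classical all_reals all_analysis.
Set Implicit Arguments. Unset Strict Implicit. Unset Printing Implicit Defensive.
Import Order.TTheory GRing.Theory Num.Theory.
Import numFieldNormedType.Exports.
Local Open Scope classical_set_scope.
Local Open Scope ring_scope.

Section Defs.
Variables (R : realType) (n : nat).
Local Notation V := 'rV[R]_n.

Definition cube01 : set V := [set x | forall i : 'I_n, 0 < x ord0 i < 1].

Definition boundary (A : set V) : set V := closure A `\` interior A.

Definition borelV : set (set V) := <<s [set U : set V | open U] >>.

(* Subbasic open sets of the Vietoris topology on K((0,1)^n):
   {K | K ⊆ U} and {K | K ∩ U ≠ ∅}, U open in (0,1)^n (i.e. U = W ∩ (0,1)^n, W open). *)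
Definition vietoris_subbasic (S : set (set V)) : Prop :=
  exists2 W : set V, open W &
    (S = [set K | K `<=` W `&` cube01] \/ S = [set K | K `&` (W `&` cube01) !=set0]).

Definition vietoris_basic (B : set (set V)) : Prop :=
  exists s : seq (set (set V)),
    (forall S, S \in s -> vietoris_subbasic S) /\
    B = [set K | forall S, S \in s -> S K].

Definition Kcube : set (set V) := [set K | compact K /\ K `<=` cube01].

Definition vietoris_open (O : set (set V)) : Prop :=
  O `<=` Kcube /\
  forall K, O K -> exists2 B, vietoris_basic B & B K /\ B `&` Kcube `<=` O.

Definition Xint : set (set V) := [set K | Kcube K /\ interior K !=set0].

Definition borelX : set (set (set V)) :=
  <<s Xint, [set Xint `&` O | O in vietoris_open] >>.

Definition borel_map_X (f : set V -> V) : Prop :=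
  forall B : set V, borelV B -> borelX (Xint `&` f @^-1` B).

End Defs.

Arguments cube01 {R n}.
Arguments Xint {R n}.
Arguments Kcube {R n}.

(* Main.v *)
Require Import Defs.
From HB Require Import structures.
From mathcomp Require Import all_boot all_order all_algebra.
From mathcomp Require Import all_classical all_reals all_analysis.
From mathcomp Require Import ring lra zify.
Import Order.TTheory GRing.Theory Num.Theory.
Import numFieldNormedType.Exports.
Local Open Scope classical_set_scope.
Local Open Scope ring_scope.

Lemma odd2S a : odd (2 * a + 1). Proof. by rewrite addn1 mul2n /= odd_double. Qed.
Lemma odd2 a : odd (2 * a) = false. Proof. by rewrite mul2n odd_double. Qed.
Lemma odd_pow_inj (a b x y : nat) :
  ((2 * a + 1) * 2 ^ x = (2 * b + 1) * 2 ^ y)%N -> x = y /\ a = b.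
Proof.
elim: x y => [|x IH] [|y].
- rewrite !expn0 !muln1 => /eqP; rewrite eqn_add2r eqn_mul2l => /orP [h|/eqP ->].
    discriminate h.
  split; reflexivity.
- rewrite expn0 muln1 expnS (mulnCA (2 * b + 1)) => /(congr1 odd).
  rewrite (odd2S a) (odd2 ((2 * b + 1) * 2 ^ y)) => h; discriminate h.
- rewrite expn0 muln1 expnS (mulnCA (2 * a + 1)) => /(congr1 odd).
  rewrite (odd2S b) (odd2 ((2 * a + 1) * 2 ^ x)) => h; discriminate h.
- rewrite !expnS (mulnCA (2 * a + 1)) (mulnCA (2 * b + 1)) => /eqP.
  rewrite eqn_mul2l => /orP [h|/eqP /IH [-> ->]].
    discriminate h.
  split; reflexivity.
Qed.

Section PA.
Variable R : realType.

Definition tw (m : nat) : R := 2%:R ^+ m.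
Definition rr (m : nat) : R := (tw m)^-1.

Lemma tw_gt0 m : 0 < tw m. Proof. by rewrite /tw exprn_gt0. Qed.
Lemma rr_gt0 m : 0 < rr m. Proof. by rewrite /rr invr_gt0 tw_gt0. Qed.
Lemma twS m : tw m.+1 = 2 * tw m. Proof. by rewrite /tw exprS. Qed.
Lemma rrS m : rr m.+1 = rr m / 2.
Proof. by rewrite /rr twS invfM mulrC. Qed.
Lemma tw_nat m : tw m = (2 ^ m)%:R. Proof. by rewrite /tw natrX. Qed.
Lemma rr_le m M : (M <= m)%N -> rr m <= rr M.
Proof.
move=> h; rewrite /rr lef_pV2 ?posrE ?tw_gt0 // !tw_nat ler_nat leq_exp2l //.
Qed.
Lemma rr_small e : 0 < e -> exists M, rr M < e.
Proof.
move=> e0; have h := upper_nthrootP (leqnn (Num.bound e^-1)).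
exists (Num.bound e^-1); rewrite /rr /tw -[ltRHS]invrK ltf_pV2 ?posrE ?invr_gt0 ?exprn_gt0 //.
Qed.
End PA.

Section PA2.
Variables (R : realType) (n : nat).
Local Notation V := 'rV[R]_n.

Definition coord (m a : nat) : R := (2 * a + 1)%:R * rr R m.+1.

Lemma coord_in m a : (a < 2 ^ m)%N -> 0 < coord m a < 1.
Proof.
move=> h; rewrite /coord mulr_gt0 ?ltr0n ?addn1 ?rr_gt0 //=.
rewrite /rr ltr_pdivrMr ?tw_gt0 // mul1r tw_nat ltr_nat expnS.
lia.
Qed.

Lemma grid_near (x : R) m : 0 <= x <= 1 ->
  exists a, (a < 2 ^ m)%N /\ `|coord m a - x| <= rr R m.+1.
Proof.
move=> /andP [x0 x1].
set u := rr R m.+1.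
have u0 : 0 < u by exact: rr_gt0.
have twm0 : tw R m != 0 by rewrite gt_eqF // tw_gt0.
set t := x * tw R m.
have hx : x = t * 2 * u by rewrite /t /u /rr twS; field; rewrite twm0.
have [xl1|xg1] := ltP x 1.
- have t0 : 0 <= t by rewrite /t mulr_ge0 // ltW // tw_gt0.
  have := truncn_itv t0; set a := Num.truncn t => /andP [ha1 ha2].
  exists a; split.
    rewrite -(ltr_nat R) -tw_nat; apply: le_lt_trans ha1 _.
    by rewrite /t -[ltRHS]mul1r ltr_pM2r // tw_gt0.
  have -> : coord m a - x = ((2 * a + 1)%:R - 2 * t) * u.
    by rewrite /coord hx -/u; ring.
  rewrite normrM (gtr0_norm u0); apply: ler_piMl; first exact: ltW u0.
  move: ha2; rewrite -addn1 natrD => ha2; rewrite natrD natrM.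
  rewrite ler_norml; apply/andP; split; lra.
- have x1' : x = 1 by apply/eqP; rewrite eq_le x1 xg1.
  exists (2 ^ m - 1)%N; split.
    have : (0 < 2 ^ m)%N by rewrite expn_gt0.
    lia.
  have e1 : (2 * (2 ^ m - 1) + 1 = 2 * 2 ^ m - 1)%N.
    have : (0 < 2 ^ m)%N by rewrite expn_gt0.
    lia.
  have e2 : (1 <= 2 * 2 ^ m)%N.
    have : (0 < 2 ^ m)%N by rewrite expn_gt0.
    lia.
  rewrite /coord -/u e1 natrB // natrM -tw_nat.
  have -> : (2%:R * tw R m - 1) * u - x = - u.
    by rewrite x1' /u /rr twS; field; rewrite twm0.
  by rewrite normrN gtr0_norm.
Qed.

Lemma norm_entry (x : V) i : `|x ord0 i| <= `|x|.
Proof.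
rewrite (_ : `|x| = mx_norm x) // mx_normrE.
exact: (le_bigmax _ (fun ij : 'I_1 * 'I_n => `|x ij.1 ij.2|) (ord0, i)).
Qed.

Lemma norm_le (x : V) e : 0 <= e -> (forall i, `|x ord0 i| <= e) -> `|x| <= e.
Proof.
move=> e0 h; rewrite (_ : `|x| = mx_norm x) // mx_normrE.
apply: bigmax_le => // -[i j] _ /=; rewrite (ord1 i); exact: h.
Qed.

Definition pt m (s : n.-tuple nat) : V := \row_i coord m (tnth s i).
Definition valid m (s : n.-tuple nat) := forall i, (tnth s i < 2 ^ m)%N.

Lemma pt_cube m s : valid m s -> cube01 (pt m s).
Proof. by move=> h i; rewrite mxE; apply: coord_in. Qed.

Lemma grid_vec (z : V) m : (forall i, 0 <= z ord0 i <= 1) ->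
  exists s, valid m s /\ `|pt m s - z| <= rr R m.+1.
Proof.
move=> hz.
have /choice [f hf] : forall i, exists a,
  (a < 2 ^ m)%N /\ `|coord m a - z ord0 i| <= rr R m.+1.
  by move=> i; apply: grid_near.
exists [tuple f i | i < n]; split => [i|]; first by rewrite tnth_mktuple; case: (hf i).
apply: norm_le; first exact/ltW/rr_gt0.
by move=> i; rewrite !mxE tnth_mktuple; case: (hf i).
Qed.

Lemma coord_lat m a M : (m <= M)%N ->
  coord m a = ((2 * a + 1) * 2 ^ (M - m))%:R * rr R M.+1.
Proof.
move=> h; rewrite /coord /rr natrM -tw_nat.
have -> : tw R M.+1 = tw R m.+1 * tw R (M - m).
  by rewrite /tw -exprD addSn subnKC.
have t1 : tw R m.+1 != 0 by rewrite gt_eqF // tw_gt0.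
have t2 : tw R (M - m) != 0 by rewrite gt_eqF // tw_gt0.
by field; rewrite t1 t2.
Qed.

Lemma nat_dist1 (N N' : nat) : N != N' -> 1 <= `|N%:R - N'%:R : R|.
Proof.
move=> hne.
have [h|h] : (N < N')%N \/ (N' < N)%N.
  by case: (ltngtP N N') hne => h; [left|right|].
- rewrite ler_normr; apply/orP; right.
  rewrite opprB -natrB; last exact: ltnW.
  by rewrite ler1n subn_gt0.
- rewrite ler_normr; apply/orP; left.
  rewrite -natrB; last exact: ltnW.
  by rewrite ler1n subn_gt0.
Qed.

Lemma pt_sep m m' M s s' : (m <= M)%N -> (m' <= M)%N ->
  pt m s <> pt m' s' -> rr R M.+1 <= `|pt m s - pt m' s'|.
Proof.
move=> hm hm' hne.
have [i hi] : exists i, pt m s ord0 i <> pt m' s' ord0 i.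
  apply: contrapT => hn; apply: hne; apply/rowP => i.
  by apply: contrapT => hi; apply: hn; exists i.
apply: le_trans (norm_entry _ i).
move: hi; rewrite !mxE (coord_lat m (tnth s i) M hm) (coord_lat m' (tnth s' i) M hm') -mulrBl => hi.
rewrite normrM (gtr0_norm (rr_gt0 _ _)); apply: ler_peMl; first exact/ltW/rr_gt0.
apply: nat_dist1; apply/negP => /eqP he; apply: hi; by rewrite he.
Qed.

Lemma coord_eq m m' a b : coord m a = coord m' b -> m = m' /\ a = b.
Proof.
have tn k : tw R k != 0 by rewrite gt_eqF // tw_gt0.
rewrite /coord /rr => /eqP; rewrite eqr_div ?tn // !tw_nat -!natrM eqr_nat.
by move=> /eqP /odd_pow_inj [[->] ->].
Qed.

Lemma pt_inj (i0 : 'I_n) m m' s s' : pt m s = pt m' s' -> m = m' /\ s = s'.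
Proof.
move=> h.
have key : forall i, coord m (tnth s i) = coord m' (tnth s' i).
  by move=> i; have := congr1 (fun x : V => x ord0 i) h; rewrite !mxE.
have [-> _] := coord_eq _ _ _ _ (key i0); split => //.
by apply: eq_from_tnth => i; case: (coord_eq _ _ _ _ (key i)).
Qed.
End PA2.

Section PB.
Variables (R : realType) (n : nat).
Local Notation V := 'rV[R]_n.

Lemma open_norm (W : set V) :
  (forall z, W z -> exists2 e, 0 < e & forall y, `|z - y| < e -> W y) -> open W.
Proof.
move=> h; rewrite openE => z /h [e e0 he].
apply/nbhs_ballP; exists e => // y; rewrite -ball_normE /ball_ /=; exact: he.
Qed.

Lemma closureP (A : set V) x :
  closure A x <-> forall e, 0 < e -> exists y, A y /\ `|x - y| < e.
Proof.
split.
- move=> h e e0; have [y [Ay By]] := h _ (nbhsx_ballx x e e0).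
  by exists y; split => //; move: By; rewrite -ball_normE.
- move=> h B /nbhs_ballP [e /= e0 hB]; have [y [Ay hy]] := h e e0.
  by exists y; split => //; apply: hB; rewrite -ball_normE.
Qed.

Lemma interiorP (A : set V) x :
  interior A x <-> exists2 e, 0 < e & forall y, `|x - y| < e -> A y.
Proof.
split.
- move=> /nbhs_ballP [e /= e0 hB]; exists e => // y hy; apply: hB.
  by rewrite -ball_normE.
- move=> [e e0 h]; apply/nbhs_ballP; exists e => // y; rewrite -ball_normE; exact: h.
Qed.

Lemma closed_away (K : set V) x : closed K -> ~ K x ->
  exists2 d, 0 < d & forall z, K z -> d <= `|x - z|.
Proof.
move=> cK nKx; have : open (~` K) by exact: closed_openC.
rewrite openE => /(_ x nKx) /interiorP [d d0 hd]; exists d => // z Kz.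
rewrite leNgt; apply/negP => /hd; exact.
Qed.

Lemma compact_closedV (K : set V) : compact K -> closed K.
Proof. by move=> cK; apply: compact_closed => //; exact: norm_hausdorff. Qed.

Lemma open_far (p : V) r : open [set z : V | r < `|p - z|].
Proof.
apply: open_norm => z /= hz; exists (`|p - z| - r); first by rewrite subr_gt0.
move=> y hy; have := ler_distD y p z; rewrite (distrC y z) /=; lra.
Qed.

Lemma open_near (p : V) r : open [set z : V | `|p - z| < r].
Proof.
apply: open_norm => z /= hz; exists (r - `|p - z|); first by rewrite subr_gt0.
move=> y hy; have := ler_distD z p y; rewrite /=; lra.
Qed.

Definition Bor (Q : set (set V)) := @borelX R n (Xint `&` Q).

Lemma Bor_ext (Q Q' : set (set V)) :
  (forall K, Xint K -> (Q K <-> Q' K)) -> Bor Q -> Bor Q'.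
Proof.
move=> h; rewrite /Bor (_ : Xint `&` Q' = Xint `&` Q) //.
apply/seteqP; split => K [XK hK]; split => //; exact/(h K XK).
Qed.

Lemma Bor0 : Bor set0.
Proof. rewrite /Bor setI0; exact: sigma_algebra0. Qed.

Lemma BorT : Bor setT.
Proof.
rewrite /Bor (_ : Xint `&` setT = Xint `\` set0); last by rewrite setIT setD0.
apply: sigma_algebraCD; exact: sigma_algebra0.
Qed.

Lemma BorC Q : Bor Q -> Bor (~` Q).
Proof.
move=> h; rewrite /Bor (_ : Xint `&` ~` Q = Xint `\` (Xint `&` Q)).
  exact: sigma_algebraCD.
apply/seteqP; split => K /=; first by move=> [XK nQ]; split => // -[].
by move=> [XK nh]; split => // QK; apply: nh.
Qed.

Lemma Bor_bigcup (F : nat -> set (set V)) :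
  (forall k, Bor (F k)) -> Bor (\bigcup_k F k).
Proof.
move=> h; rewrite /Bor setI_bigcupr; exact: sigma_algebra_bigcup.
Qed.

Lemma BorU A B : Bor A -> Bor B -> Bor (A `|` B).
Proof.
move=> hA hB.
rewrite (_ : A `|` B = \bigcup_k (if k is 0%N then A else B)).
  by apply: Bor_bigcup => -[|k].
apply/seteqP; split => K.
  by case=> h; [exists 0%N | exists 1%N].
by move=> [[|k] _ h]; [left|right].
Qed.

Lemma BorI A B : Bor A -> Bor B -> Bor (A `&` B).
Proof.
move=> hA hB; rewrite (_ : A `&` B = ~` (~` A `|` ~` B)).
  by apply: BorC; apply: BorU; apply: BorC.
by rewrite setCU !setCK.
Qed.

Lemma Bor_gen (S : set (set V)) : vietoris_subbasic S -> Bor S.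
Proof.
move=> hS.
rewrite /Bor (_ : Xint `&` S = Xint `&` (S `&` Kcube)); last first.
  apply/seteqP; split => K; first by move=> [XK SK]; split => //; split => //; case: XK.
  by move=> [XK [SK _]].
apply: (@sub_sigma_algebra _ Xint [set Xint `&` O | O in @vietoris_open R n]).
exists (S `&` Kcube) => //.
split; first by move=> K [].
move=> K [SK KK]; exists S; last by split => // L [].
exists [:: S]; split; first by move=> S'; rewrite mem_seq1 => /eqP ->.
apply/seteqP; split => L /=.
  by move=> SL S'; rewrite mem_seq1 => /eqP ->.
by move=> /(_ S); rewrite mem_seq1 eqxx; apply.
Qed.

Lemma Bor_sub (W : set V) : open W -> Bor [set K | forall z, K z -> W z].
Proof.
move=> oW; apply: (@Bor_ext [set K | K `<=` W `&` cube01]).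
  move=> K [[_ Kc] _]; split; first by move=> h z /h [].
  by move=> h z Kz; split; [exact: h | exact: Kc].
by apply: Bor_gen; exists W => //; left.
Qed.

Lemma Bor_hit (W : set V) : open W -> Bor [set K | exists z, K z /\ W z].
Proof.
move=> oW; apply: (@Bor_ext [set K | K `&` (W `&` cube01) !=set0]).
  move=> K [[_ Kc] _]; split; first by move=> [z [Kz [Wz _]]]; exists z.
  by move=> [z [Kz Wz]]; exists z; split => //; split => //; exact: Kc.
by apply: Bor_gen; exists W => //; right.
Qed.
End PB.

Section PD.
Variables (R : realType) (n : nat).
Local Notation V := 'rV[R]_n.
Local Notation pt := (@pt R n).
Local Notation valid := (@valid n).

Definition dec (j : nat) : option (nat * n.-tuple nat) := pickle_inv j.
Definition pt_of (j : nat) : V :=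
  if dec j is Some (m, s) then pt m s else 0.

Definition PK (K : set V) (j : nat) : Prop :=
  exists m s, dec j = Some (m, s) /\ valid m s /\
    (forall z, K z -> rr R m < `|pt m s - z|) /\
    (exists z, K z /\ `|pt m s - z| < 3 * rr R m).

Lemma pt_ofE j m s : dec j = Some (m, s) -> pt_of j = pt m s.
Proof. by rewrite /pt_of => ->. Qed.

Lemma decE j : dec j = pickle_inv j.
Proof. by []. Qed.

Lemma PK_out K j : PK K j -> cube01 (pt_of j) /\ ~ K (pt_of j).
Proof.
move=> [m [s [e [v [h1 _]]]]]; rewrite /pt_of e; split; first exact: pt_cube.
move=> /h1; rewrite subrr normr0 ltNge; move/negP; apply; exact/ltW/rr_gt0.
Qed.

Lemma PK_far K j : PK K j -> exists2 d, 0 < d & forall z, K z -> d <= `|pt_of j - z|.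
Proof.
move=> [m [s [e [v [h1 _]]]]]; rewrite /pt_of e; exists (rr R m); first exact: rr_gt0.
by move=> z /h1 /ltW.
Qed.

Lemma key_iso (K : set V) (x : V) (d : R) : 0 < d ->
  (forall z, K z -> d <= `|x - z|) ->
  exists rho, [/\ 0 < rho, rho <= d &
    forall j j', PK K j -> PK K j' -> `|x - pt_of j| < rho ->
      `|x - pt_of j'| < rho -> pt_of j = pt_of j'].
Proof.
move=> d0 hd.
have [M hM] := rr_small R (d / 6) (divr_gt0 d0 (ltr0n _ 6)).
have lvl : forall j, PK K j -> `|x - pt_of j| < d / 2 ->
    exists m s, [/\ dec j = Some (m, s), pt_of j = pt m s & (m <= M)%N].
  move=> j [m [s [e [v [_ [z [Kz hz]]]]]]]; rewrite /pt_of e => hx.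
  exists m, s; split => //.
  rewrite leqNgt; apply/negP => hMm.
  have hr : rr R m <= rr R M by apply: rr_le; exact: ltnW.
  have := hd z Kz; have := ler_distD (pt m s) x z; lra.
set rho := Num.min (d / 2) (rr R M.+2).
have rho0 : 0 < rho by rewrite lt_min rr_gt0 andbT divr_gt0.
have rho1 : rho <= d / 2 by rewrite ge_min lexx.
have rho2 : rho <= rr R M.+2 by rewrite ge_min lexx orbT.
exists rho; split => //; first lra.
move=> j j' hj hj' h1 h2.
have [m [s [e1 p1 l1]]] := lvl j hj (lt_le_trans h1 rho1).
have [m' [s' [e2 p2 l2]]] := lvl j' hj' (lt_le_trans h2 rho1).
rewrite p1 p2; apply: contrapT => hne.
have := pt_sep R n m m' M s s' l1 l2 hne.
have := ler_distD x (pt m s) (pt m' s').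
rewrite (distrC (pt m s) x) -p1 -p2.
have := rrS R M.+1; lra.
Qed.

Lemma select_exists (K : set V) (y w : V) (M0 : nat) :
  closed K -> K y -> ~ K w ->
  (forall i, 0 <= y ord0 i <= 1) -> (forall i, 0 <= w ord0 i <= 1) ->
  exists j m s, [/\ dec j = Some (m, s), (M0 <= m)%N, PK K j &
    `|y - pt m s| <= `|y - w| + rr R m.+1].
Proof.
move=> cK Ky nKw hy hw.
set d := fun z : V => inf [set `|z - k| | k in K].
have hlb : forall z : V, has_lbound [set `|z - k| | k in K].
  by move=> z; exists 0 => _ [k _ <-].
have hne : forall z : V, [set `|z - k| | k in K] !=set0.
  by move=> z; exists `|z - y|, y.
have dle : forall z k, K k -> d z <= `|z - k|.
  by move=> z k Kk; apply: ge_inf; [exact: hlb | exists k].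
have dge : forall z c, (forall k, K k -> c <= `|z - k|) -> c <= d z.
  move=> z c h; apply: lb_le_inf; first exact: hne.
  by move=> _ [k Kk <-]; exact: h.
have dlt : forall z c, d z < c -> exists k, K k /\ `|z - k| < c.
  move=> z c /(inf_lt (hne z)) [_ [k Kk <-] h]; by exists k.
have dlip : forall z z', d z <= d z' + `|z - z'|.
  move=> z z'; rewrite -lerBlDr; apply: dge => k Kk.
  rewrite lerBlDr; apply: le_trans (dle z k Kk) _.
  by rewrite [leRHS]addrC; exact: ler_distD.
have dy : d y <= 0 by have := dle y y Ky; rewrite subrr normr0.
have [del del0 hdel] := closed_away R n K w cK nKw.
have dw : del <= d w by apply: dge.
have [M1 hM1] := rr_small R (del / 2) (divr_gt0 del0 (ltr0n _ 2)).
set m := maxn M0 M1.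
set r := rr R m.
have r0 : 0 < r by exact: rr_gt0.
have hr : r < del / 2 by apply: le_lt_trans hM1; apply: rr_le; exact: leq_maxr.
set L := `|w - y|.
have L0 : 0 <= L by rewrite /L normr_ge0.
set N := Num.bound (2 * L / r).
have hN : 2 * L / r < N%:R by apply: archi_boundP; rewrite divr_ge0 // ?mulr_ge0 // ltW.
have N0 : (0 < N)%N.
  rewrite -(ltr_nat R); apply: le_lt_trans hN; rewrite divr_ge0 // ?mulr_ge0 // ltW //.
have N0' : 0 < N%:R :> R by rewrite ltr0n.
set z := fun i : nat => y + (i%:R / N%:R) *: (w - y).
set phi := fun i => d (z i).
have zN : z N = w by rewrite /z divff ?gt_eqF // scale1r addrC subrK.
have z0 : z 0%N = y by rewrite /z mul0r scale0r addr0.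
have step : forall i, `|z i.+1 - z i| <= r / 2.
  move=> i; rewrite /z opprD addrACA subrr add0r -scalerBl -mulrBl.
  rewrite -natrB // subSn // subnn normrZ -/L.
  rewrite ger0_norm ?divr_ge0 ?ler0n ?ltW // mul1r.
  rewrite mulrC ltr_pdivrMr //; move: hN; rewrite ltr_pdivrMr //; nra.
have hex : exists i, (2 * r <= phi i).
  exists N; rewrite /phi zN; lra.
case: (ex_minnP hex) => i0 hi0 hmin.
have i0N : (i0 <= N)%N by apply: hmin; rewrite /phi zN; lra.
have i0pos : (0 < i0)%N.
  rewrite lt0n; apply/negP => /eqP e0; move: hi0; rewrite e0 /phi z0; lra.
have hprev : phi i0.-1 < 2 * r.
  rewrite ltNge; apply/negP => /hmin; move: i0pos; case: (i0) => [//|k] _.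
  by rewrite /= ltnn.
have hup : phi i0 < 5 / 2 * r.
  have := dlip (z i0) (z i0.-1); have := step i0.-1; rewrite prednK //.
  rewrite /phi in hprev *; lra.
set zz := z i0.
have zzc : forall k, 0 <= zz ord0 k <= 1.
  move=> k; rewrite /zz /z !mxE.
  set t := i0%:R / N%:R.
  have t0 : 0 <= t by rewrite divr_ge0 ?ler0n // ltW.
  have t1 : t <= 1 by rewrite ler_pdivrMr // mul1r ler_nat.
  have := hy k; have := hw k; move=> /andP[? ?] /andP[? ?].
  apply/andP; split; nra.
have [s [vs hs]] := grid_vec R n zz m zzc.
set p := pt m s.
have hp1 : d p >= d zz - r / 2.
  have := dlip zz p; rewrite (distrC zz p); rewrite rrS -/r in hs; lra.
have hp2 : d p <= d zz + r / 2.
  have := dlip p zz; rewrite rrS -/r in hs; lra.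
exists (pickle (m, s)), m, s; split.
- by rewrite /dec pickleK_inv.
- exact: leq_maxl.
- exists m, s; split; first by rewrite /dec pickleK_inv.
  split => //; split.
  + move=> k Kk; have := dle p k Kk; rewrite /phi -/zz in hi0; rewrite -/r -/p; lra.
  + have [k [Kk hk]] : exists k, K k /\ `|p - k| < 3 * r.
      by apply: dlt; rewrite /phi -/zz in hup; lra.
    by exists k.
- have hyz : `|y - zz| <= L.
    rewrite /zz /z opprD addrA subrr add0r normrN normrZ -/L.
    rewrite ger0_norm; last by rewrite divr_ge0 ?ler0n // ltW.
    apply: ler_piMl => //; rewrite ler_pdivrMr // mul1r ler_nat //.
  have := ler_distD zz y p; rewrite (distrC zz p) -/p -/L (distrC y w) -/L.
  rewrite rrS -/r in hs *; lra.
Qed.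
End PD.

Section PE.
Variables (R : realType) (n : nat).
Local Notation V := 'rV[R]_n.
Local Notation PK := (@PK R n).
Local Notation pt_of := (@pt_of R n).
Local Notation dec := (@dec n).
Local Notation pt := (@pt R n).
Local Notation valid := (@valid n).
Local Notation Bor := (@Bor R n).

Definition selb (K : set V) j : bool := `[< PK K j >].
Definition nextge (K : set V) i : nat :=
  match pselect (exists j, (i <= j)%N && selb K j) with
  | left h => @ex_minn (fun j => (i <= j)%N && selb K j) h
  | right _ => 0%N end.
Fixpoint gg (K : set V) k := if k is k'.+1 then nextge K (gg K k').+1 else nextge K 0.

Lemma nextge_spec K i : (exists j, (i <= j)%N /\ PK K j) ->
  [/\ (i <= nextge K i)%N, PK K (nextge K i) &
      forall l, (i <= l)%N -> PK K l -> (nextge K i <= l)%N].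
Proof.
move=> [j [hij hj]]; rewrite /nextge; case: pselect => [h|hn]; last first.
  by exfalso; apply: hn; exists j; rewrite hij; apply/asboolP.
case: ex_minnP => m /andP [h1 /asboolP h2] hmin; split => // l hl hPl.
apply: hmin; rewrite hl; exact/asboolP.
Qed.

Arguments nextge_spec [K i].

Lemma nextge_eq K i j : (exists j, (i <= j)%N /\ PK K j) ->
  (nextge K i = j <-> [/\ (i <= j)%N, PK K j & forall l, (i <= l < j)%N -> ~ PK K l]).
Proof.
move=> hi; have [h1 h2 h3] := nextge_spec hi; split.
- move=> <-; split => // l /andP [hl hlj] hP; have := h3 l hl hP.
  by rewrite leqNgt hlj.
- move=> [a b c]; apply/eqP; rewrite eqn_leq h3 //=.
  rewrite leqNgt; apply/negP => hlt; apply: (c _ _ h2); by rewrite h1 hlt.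
Qed.

Lemma lvl_bound i : exists L, forall j, (j < i)%N ->
  forall m s, dec j = Some (m, s) -> (m <= L)%N.
Proof.
elim: i => [|i [L hL]]; first by exists 0%N.
case e: (dec i) => [[m0 s0]|].
- exists (maxn L m0) => j; rewrite ltnS leq_eqVlt => /orP [/eqP ->|hj] m s.
    by rewrite e => -[-> _]; exact: leq_maxr.
  by move=> /(hL j hj) h; apply: leq_trans h (leq_maxl _ _).
- exists L => j; rewrite ltnS leq_eqVlt => /orP [/eqP ->|hj] m s.
    by rewrite e.
  exact: hL.
Qed.

Lemma Xint_props (K : set V) : Xint K ->
  [/\ closed K, K `<=` cube01 & exists x, K x].
Proof.
move=> [[cK Kc] [x ix]]; split => //; first exact: compact_closedV.
by exists x; exact: interior_subset.
Qed.

Lemma cube_closed (x : V) : cube01 x -> forall i, 0 <= x ord0 i <= 1.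
Proof. by move=> h i; have /andP [a b] := h i; rewrite !ltW. Qed.

Lemma hinf (i0 : 'I_n) (K : set V) : Xint K -> forall i, exists j, (i <= j)%N /\ PK K j.
Proof.
move=> /Xint_props [cK Kc [x Kx]] i.
have n0 : ~ K 0.
  move=> /Kc /(_ i0); rewrite mxE ltxx; done.
have [L hL] := lvl_bound i.
have [j [m [s [e hm hP _]]]] := select_exists R n K x 0 L.+1 cK Kx n0
  (@cube_closed x (Kc x Kx)) (fun i => ltac:(by rewrite mxE lexx ler01)).
exists j; split => //; rewrite leqNgt; apply/negP => hj.
by have := hL j hj m s e; rewrite leqNgt hm.
Qed.

Section Fixed.
Variable K : set V.
Hypothesis hinfK : forall i, exists j, (i <= j)%N /\ PK K j.

Lemma gg_sel k : PK K (gg K k).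
Proof.
case: k => [|k] /=; first by case: (nextge_spec (hinfK 0)).
by case: (nextge_spec (hinfK (gg K k).+1)).
Qed.

Lemma gg_lt k : (gg K k < gg K k.+1)%N.
Proof. by rewrite /=; case: (nextge_spec (hinfK (gg K k).+1)). Qed.

Lemma gg_ge k : (k <= gg K k)%N.
Proof.
elim: k => // k IH; apply: leq_ltn_trans IH (gg_lt k).
Qed.

Lemma gg_mono k d : (gg K k < gg K (k + d.+1))%N.
Proof.
elim: d => [|d IH].
  rewrite addn1; exact: (gg_lt k).
apply: ltn_trans IH _.
have -> : (k + d.+2 = (k + d.+1).+1)%N by rewrite addnS.
exact: (gg_lt (k + d.+1)).
Qed.

Lemma gg_ltn k k' : (k < k')%N -> (gg K k < gg K k')%N.
Proof.
elim: k' => // k' IH; rewrite ltnS leq_eqVlt => /orP [/eqP ->|h].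
  exact: gg_lt.
exact: ltn_trans (IH h) (gg_lt k').
Qed.

Lemma gg_inj : injective (gg K).
Proof.
move=> k k' e; apply/eqP; rewrite eqn_leq; apply/andP; split;
  rewrite leqNgt; apply/negP => h.
- by have := gg_ltn _ _ h; rewrite e ltnn.
- by have := gg_ltn _ _ h; rewrite e ltnn.
Qed.

Lemma gg_surj j : PK K j -> exists k, gg K k = j.
Proof.
move=> hj; apply: contrapT => hn.
have hP : forall k, (gg K k <= j)%N.
  elim => [|k IH].
    by case: (nextge_spec (hinfK 0)) => _ _ /(_ j (leq0n _) hj).
  have hlt : (gg K k < j)%N.
    by rewrite ltn_neqAle IH andbT; apply/eqP => e; apply: hn; exists k.
  by case: (nextge_spec (hinfK (gg K k).+1)) => _ _ /(_ j hlt hj).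
by have := leq_trans (gg_ge j.+1) (hP j.+1); rewrite ltnn.
Qed.
End Fixed.
End PE.

Section PF.
Variables (R : realType) (n : nat).
Local Notation V := 'rV[R]_n.
Local Notation PK := (@PK R n).
Local Notation pt_of := (@pt_of R n).
Local Notation dec := (@dec n).
Local Notation pt := (@pt R n).
Local Notation gg := (@gg R n).

Lemma lin5 (a b c d f e : R) : a <= b + d -> b < c -> c <= e / 2 -> d <= f ->
  f < e / 2 -> a < e.
Proof. lra. Qed.

Section Fixed.
Variables (i0 : 'I_n) (K : set V).
Hypothesis XK : Xint K.

Let hinfK := hinf R n i0 K XK.
Let sel k : PK K (gg K k) := gg_sel R n K hinfK k.
Let S := range (fun k => pt_of (gg K k)).

Lemma Xprops : [/\ closed K, K `<=` cube01 & exists x, K x].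
Proof. exact: Xint_props. Qed.

Lemma clos_charac : closure S = S `|` boundary K.
Proof.
have [cK Kc _] := Xprops.
apply/seteqP; split => x.
- move=> cx; case: (pselect (K x)) => Kx.
  + right; split; first exact: subset_closure.
    move=> /(interiorP R n K x) [e e0 he].
    have [_ [[k _ <-] hy]] := (closureP R n S x).1 cx e e0.
    by have [_] := PK_out R n K _ (sel k); apply; apply: he.
  + have [d d0 hd] := closed_away R n K x cK Kx.
    have [rho [r0 rd hr]] := key_iso R n K x d d0 hd.
    have [_ [[k1 _ <-] h1]] := (closureP R n S x).1 cx rho r0.
    case: (pselect (x = pt_of (gg K k1))) => [->|hne]; first by left; exists k1.
    set e2 := Num.min rho `|x - pt_of (gg K k1)|.
    have e20 : 0 < e2.
      rewrite lt_min r0 normr_gt0 /=; apply/negP => /eqP /subr0_eq; exact: hne.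
    have [_ [[k2 _ <-] h2]] := (closureP R n S x).1 cx e2 e20.
    have e2r : e2 <= rho by rewrite ge_min lexx.
    have e2d : e2 <= `|x - pt_of (gg K k1)| by rewrite ge_min lexx orbT.
    have heq := hr _ _ (sel k1) (sel k2) h1 (lt_le_trans h2 e2r).
    by move: (lt_le_trans h2 e2d); rewrite heq ltxx.
- case=> [Sx|[cKx nix]]; first exact: subset_closure.
  have Kx : K x by move: cKx; rewrite -(proj1 (closure_id K) cK).
  apply/(closureP R n S x) => e e0.
  set c := \big[Num.min/1]_(i < n) Num.min (x ord0 i) (1 - x ord0 i).
  have hxc : forall i, 0 < x ord0 i < 1 by move=> i; exact: (Kc x Kx i).
  have c0 : 0 < c.
    apply/bigmin_gtP; split => // i _; rewrite lt_min.
    by have /andP [a b] := hxc i; rewrite a subr_gt0 b.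
  have cle : forall i, c <= x ord0 i /\ c <= 1 - x ord0 i.
    move=> i; have : c <= Num.min (x ord0 i) (1 - x ord0 i) by rewrite /c; exact: bigmin_le.
    by rewrite le_min => /andP [].
  set eps := Num.min (e / 2) c.
  have eps0 : 0 < eps by rewrite lt_min c0 andbT divr_gt0.
  have [w [hw nKw]] : exists w, `|x - w| < eps /\ ~ K w.
    apply: contrapT => hn; apply: nix; apply/(interiorP R n K x); exists eps => // y hy.
    by apply: contrapT => nKy; apply: hn; exists y.
  have hwc : forall i, 0 <= w ord0 i <= 1.
    move=> i; have := norm_entry R n (x - w) i; rewrite !mxE => hi.
    have [c1 c2] := cle i.
    have hle : eps <= c by rewrite ge_min lexx orbT.
    have : `|x ord0 i - w ord0 i| < c by apply: le_lt_trans hi _; apply: lt_le_trans hw hle.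
    rewrite ltr_norml => /andP [a b]; apply/andP; split; lra.
  have [M0 hM0] := rr_small R (e / 2) (divr_gt0 e0 (ltr0n _ 2)).
  have [j [m [s [ej hm hP hd]]]] := select_exists R n K x w M0 cK Kx nKw
    (cube_closed R n x (Kc x Kx)) hwc.
  have [k hk] := gg_surj R n K hinfK j hP.
  exists (pt_of j); split; first by exists k => //=; rewrite hk.
  rewrite (pt_ofE R n _ _ _ ej).
  have hrr : rr R m.+1 <= rr R M0 by apply: rr_le; apply: leq_trans hm _.
  have hwe : eps <= e / 2 by rewrite ge_min lexx.
  exact: (lin5 _ _ _ _ _ _ hd hw hwe hrr hM0).
Qed.

Lemma isolated l : exists U : set V,
  [/\ open U, U (pt_of (gg K l)) & U `&` closure S `<=` [set pt_of (gg K l)]].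
Proof.
have [cK Kc _] := Xprops.
set p := pt_of (gg K l).
have [d d0 hd] := PK_far R n K _ (sel l).
have [rho [r0 rd hr]] := key_iso R n K p d d0 hd.
exists [set z | `|p - z| < rho]; split.
- exact: open_near.
- by rewrite /= subrr normr0.
- move=> z [hz]; rewrite clos_charac => -[[k _ hk]|[cKz _]].
    have hp : `|p - p| < rho by rewrite subrr normr0.
    rewrite -hk /= in hz *; apply/esym; exact: (hr (gg K l) (gg K k) (sel l) (sel k) hp hz).
  have Kz : K z by move: cKz; rewrite -(proj1 (closure_id K) cK).
  by have := hd z Kz; rewrite leNgt (lt_le_trans hz rd).
Qed.

Lemma inj_f : injective (fun k => pt_of (gg K k)).
Proof.
move=> k k' /= e.
have [m [s [e1 _]]] := sel k; have [m' [s' [e2 _]]] := sel k'.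
move: e; rewrite (pt_ofE R n _ _ _ e1) (pt_ofE R n _ _ _ e2) => /(pt_inj R n i0) [hm hs].
apply: (gg_inj R n K hinfK).
have := @pickle_invK (nat * n.-tuple nat)%type (gg K k); have := @pickle_invK (nat * n.-tuple nat)%type (gg K k').
rewrite !decE in e1 e2.
by rewrite e1 e2 /= hm hs => -> ->.
Qed.

Lemma out_f k : (cube01 `\` K) (pt_of (gg K k)).
Proof. by have [a b] := PK_out R n K _ (sel k); split. Qed.
End Fixed.
End PF.

Section PG.
Variables (R : realType) (n : nat).
Local Notation V := 'rV[R]_n.
Local Notation PK := (@PK R n).
Local Notation pt_of := (@pt_of R n).
Local Notation dec := (@dec n).
Local Notation pt := (@pt R n).
Local Notation valid := (@valid n).
Local Notation gg := (@gg R n).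
Local Notation nextge := (@nextge R n).
Local Notation Bor := (@Bor R n).

Lemma Bor_const (P : Prop) : Bor [set _ | P].
Proof.
case: (pselect P) => p.
  apply: (Bor_ext R n setT); last exact: BorT.
  by move=> K _; split.
apply: (Bor_ext R n set0); last exact: Bor0.
by move=> K _; split.
Qed.

Lemma Bor_PK j : Bor [set K | PK K j].
Proof.
case e: (dec j) => [[m s]|]; last first.
  apply: (Bor_ext R n set0); last exact: Bor0.
  by move=> K _; split => // -[m [s [e' _]]]; move: e'; rewrite e.
case: (pselect (valid m s)) => v; last first.
  apply: (Bor_ext R n set0); last exact: Bor0.
  move=> K _; split => // -[m' [s' [e' [v' _]]]].
  by move: e'; rewrite e => -[hm hs]; apply: v; rewrite hm hs.
apply: (Bor_ext R n ([set K | forall z, K z -> [set z | rr R m < `|pt m s - z|] z] `&`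
  [set K | exists z, K z /\ [set z | `|pt m s - z| < 3 * rr R m] z])).
  move=> K _; split.
    by move=> [h1 h2]; exists m, s.
  move=> [m' [s' [e' [_ [h1 h2]]]]].
  move: e'; rewrite e => -[hm hs]; rewrite hm hs; split => //.
apply: BorI.
  apply: Bor_sub; exact: open_far.
apply: Bor_hit; exact: open_near.
Qed.

Lemma Bor_none i j : Bor [set K | forall l, (i <= l < j)%N -> ~ PK K l].
Proof.
elim: j => [|j IH].
  apply: (Bor_ext R n setT); last exact: BorT.
  by move=> K _; split => // _ l /andP [_]; rewrite ltn0.
apply: (Bor_ext R n ([set K | forall l, (i <= l < j)%N -> ~ PK K l] `&`
   (~` [set K | PK K j] `|` [set _ | (j < i)%N]))); last first.
  by apply: BorI => //; apply: BorU; [apply: BorC; exact: Bor_PK | exact: Bor_const].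
move=> K _; split.
- move=> [h1 h2] l /andP [hl]; rewrite ltnS leq_eqVlt => /orP [/eqP e|hlj].
    rewrite e in hl *.
    by case: h2 => // /= hji; move: hl; rewrite leqNgt hji.
  by apply: h1; rewrite hl hlj.
- move=> h; split.
    by move=> l /andP [hl hlj]; apply: h; rewrite hl (ltn_trans hlj).
  case: (leqP i j) => hij; [left | by right].
  by apply: h; rewrite hij ltnSn.
Qed.

Lemma Bor_nextge (i0 : 'I_n) i j : Bor [set K | nextge K i = j].
Proof.
apply: (Bor_ext R n ([set _ | (i <= j)%N] `&` ([set K | PK K j] `&`
   [set K | forall l, (i <= l < j)%N -> ~ PK K l]))); last first.
  apply: BorI; first exact: Bor_const.
  apply: BorI; [exact: Bor_PK | exact: Bor_none].
move=> K XK; have := nextge_eq R n K i j (hinf R n i0 K XK i).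
move=> [h1 h2]; split.
  by move=> [a [b c]]; apply: h2.
by move=> /h1 [a b c].
Qed.

Lemma Bor_g (i0 : 'I_n) k j : Bor [set K | gg K k = j].
Proof.
elim: k j => [|k IH] j.
  exact: Bor_nextge.
apply: (Bor_ext R n (\bigcup_i ([set K | gg K k = i] `&` [set K | nextge K i.+1 = j]))); last first.
  apply: Bor_bigcup => i; apply: BorI; [exact: IH | exact: Bor_nextge].
move=> K _; split.
  by move=> [i _ [/= h1 h2]]; rewrite /= h1.
by move=> h; exists (gg K k) => //.
Qed.

Lemma meas (i0 : 'I_n) k : borel_map_X (fun K => pt_of (gg K k)).
Proof.
move=> B _.
change (Bor [set K | B (pt_of (gg K k))]).
apply: (Bor_ext R n (\bigcup_j ([set K | gg K k = j] `&` [set _ | B (pt_of j)]))); last first.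
  apply: Bor_bigcup => j; apply: BorI; [exact: Bor_g | exact: Bor_const].
move=> K _; split.
  by move=> [j _ [/= h1 h2]]; rewrite h1.
by move=> h; exists (gg K k).
Qed.
End PG.

Theorem lemma3p18 (R : realType) (n : nat) (hn : (1 <= n)%N) :
  exists f : nat -> set 'rV[R]_n -> 'rV[R]_n,
    (forall k, borel_map_X (f k)) /\
    forall K, Xint K ->
      let S := range (fun k => f k K) in
      [/\ (forall k, (cube01 `\` K) (f k K)),
          injective (fun k => f k K),
          closure S = S `|` boundary K &
          (forall l, exists U : set 'rV[R]_n,
              [/\ open U, U (f l K) & U `&` closure S `<=` [set f l K]])].
Proof.
have i0 : 'I_n := Ordinal hn.
exists (fun k K => pt_of R n (gg R n K k)); split.
  move=> k; exact: meas R n i0 k.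
move=> K XK S; split.
- exact: out_f R n i0 K XK.
- exact: inj_f R n i0 K XK.
- exact: clos_charac R n i0 K XK.
- exact: isolated R n i0 K XK.
Qed.
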